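(* Let $R\subseteq\mathbb{N}$ be such that there is a positive integer $k$ with $R\cap k\mathbb{Z}=\emptyset$. Then for any positive integer $d$, there exists a colouring of $\mathbb{R}^d$ with $2k^2$ colours containing no monochromatic congruent copy of $rL^d$ for any $r\in R$.
   Context: $L^d$ denotes a three-point set $\{x,y,z\}\subseteq\mathbb{Z}^d$ with $\|x-y\|_2=\|y-z\|_2=1$ and $\|x-z\|_2=2$ (three equally spaced collinear points), and $rL^d=\{rx,ry,rz\}$. A congruent copy is the image under an isometry of $\mathbb{R}^d$. *)

(* Defs.v *)
From HB Require Import structures.
From mathcomp Require Import all_boot all_order all_algebra.
From mathcomp Require Import reals.
Set Implicit Arguments. Unset Strict Implicit. Unset Printing Implicit Defensive.
Import Order.TTheory GRing.Theory Num.Theory.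
Local Open Scope ring_scope.

Definition enorm (R : realType) (d : nat) (u : 'rV[R]_d) : R :=
  Num.sqrt (\sum_(i < d) (u 0 i) ^+ 2).

Definition intv (R : realType) (d : nat) (x : 'rV[int]_d) : 'rV[R]_d :=
  map_mx (fun n : int => n%:~R) x.

Definition is_Ld (R : realType) (d : nat) (x y z : 'rV[int]_d) : Prop :=
  enorm (intv R x - intv R y) = 1 /\ enorm (intv R y - intv R z) = 1 /\
  enorm (intv R x - intv R z) = 2.

Definition is_isometry (R : realType) (d : nat) (f : 'rV[R]_d -> 'rV[R]_d) : Prop :=
  forall u v, enorm (f u - f v) = enorm (u - v).

(* Main.v *)
Require Import Defs.
From HB Require Import structures.
From mathcomp Require Import all_boot all_order all_algebra.
From mathcomp Require Import reals.
From mathcomp Require Import ring lra zify.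
Import Order.TTheory GRing.Theory Num.Theory.
Local Open Scope ring_scope.

Section Aux.
Variable R : realType.
Variable d : nat.

Definition sq (u : 'rV[R]_d) : R := \sum_(i < d) (u 0 i) ^+ 2.
Definition dot (u v : 'rV[R]_d) : R := \sum_(i < d) (u 0 i * v 0 i).

Lemma sq_ge0 u : 0 <= sq u.
Proof. by apply: sumr_ge0 => i _; rewrite sqr_ge0. Qed.

Lemma sq_enorm u : sq u = enorm u ^+ 2.
Proof. by rewrite /enorm sqr_sqrtr // sq_ge0. Qed.

Lemma sq_scale a u : sq (a *: u) = a ^+ 2 * sq u.
Proof. by rewrite /sq mulr_sumr; apply: eq_bigr => i _; rewrite mxE exprMn. Qed.

Lemma sq_add p q : sq (p + q) = sq p + sq q + 2 * dot p q.
Proof.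
rewrite /sq /dot mulr_sumr -!big_split; apply: eq_bigr => i _; rewrite !mxE /=; ring.
Qed.

Lemma sq_sub p q : sq (p - q) = sq p + sq q - 2 * dot p q.
Proof.
rewrite /sq /dot mulr_sumr -sumrN -!big_split; apply: eq_bigr => i _; rewrite !mxE /=; ring.
Qed.

Lemma sq_eq0 u : sq u = 0 -> u = 0.
Proof.
move=> /eqP; rewrite psumr_eq0 => [/allP H|i _]; last by rewrite sqr_ge0.
apply/rowP => i; rewrite !mxE.
by have := H i (mem_index_enum _); rewrite /= sqrf_eq0 => /eqP.
Qed.

Lemma mid_identity a b c s : sq (a - b) = s -> sq (b - c) = s -> sq (a - c) = 4 * s ->
  sq a + sq c - 2 * sq b = 2 * s.
Proof.
move=> h1 h2 h3.
have hac : a - c = (a - b) + (b - c) by rewrite addrA subrK.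
have hd : dot (a - b) (b - c) = s.
  move: h3; rewrite hac sq_add h1 h2 => h; lra.
have hpq : (a - b) = (b - c).
  apply/eqP; rewrite -subr_eq0; apply/eqP; apply: sq_eq0.
  rewrite sq_sub h1 h2 hd; ring.
have ha : a = b + (a - b) by rewrite addrC subrK.
have hc : c = b - (a - b) by rewrite hpq opprB addrC subrK.
have gen : forall b' p, sq (b' + p) + sq (b' - p) - 2 * sq b' = 2 * sq p.
  by move=> b' p; rewrite sq_add sq_sub; ring.
by rewrite ha hc gen h1.
Qed.

End Aux.
Arguments sq {R d}. Arguments dot {R d}.
Arguments sq_enorm {R d}. Arguments sq_scale {R d}. Arguments sq_add {R d}.
Arguments sq_sub {R d}. Arguments mid_identity {R d a b c s}.

Section Col.
Variable R : realType.
Variable d : nat.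
Variable k : nat.
Hypothesis hk : (0 < k)%N.

Definition tt_ (u : 'rV[R]_d) : R := sq u / 2.
Definition fl (u : 'rV[R]_d) : int := Num.floor (tt_ u).
Definition th (u : 'rV[R]_d) : R := tt_ u - (fl u)%:~R.
Definition K : nat := (k ^ 2)%N.
Definition hb (u : 'rV[R]_d) : bool := (1/2 <= th u).
Definition ra (u : 'rV[R]_d) : nat := `|(fl u %% K%:Z)%Z|%N.
Definition colN (u : 'rV[R]_d) : nat := (hb u * K + ra u)%N.

Lemma K_gt0 : (0 < K)%N.
Proof. by rewrite /K expn_gt0 hk. Qed.

Lemma ra_lt u : (ra u < K)%N.
Proof.
have h1 : (0 < K%:Z)%R by rewrite ltz_nat K_gt0.
have h2 := ltz_pmod (fl u) h1.
have h3 : ((fl u %% K%:Z)%Z >= 0)%R by apply: modz_ge0; rewrite gt_eqF.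
rewrite /ra. lia.
Qed.

Lemma colN_lt u : (colN u < 2 * k ^ 2)%N.
Proof.
have := ra_lt u. rewrite /colN /K. case: (hb u) => /=; lia.
Qed.

Definition col (u : 'rV[R]_d) : 'I_(2 * k ^ 2) := Ordinal (colN_lt u).

Lemma col_eq u v : col u = col v -> hb u = hb v /\ (fl u %% K%:Z)%Z = (fl v %% K%:Z)%Z.
Proof.
move=> /(congr1 val) /= h.
have hm := congr1 (fun n => n %% K)%N h.
have hd := congr1 (fun n => n %/ K)%N h.
rewrite /colN /= !modnMDl !modn_small ?ra_lt // in hm.
rewrite /colN /= !divnMDl ?K_gt0 // !divn_small ?ra_lt // !addn0 in hd.
split; first by move: hd; case: (hb u); case: (hb v).
have h1 : (K%:Z != 0)%R by rewrite gt_eqF // ltz_nat K_gt0.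
have g1 := modz_ge0 (fl u) h1. have g2 := modz_ge0 (fl v) h1.
move: hm; rewrite /ra. lia.
Qed.

Lemma th_bounds u : 0 <= th u < 1.
Proof.
have := Num.Theory.floor_itv (tt_ u); rewrite /th /fl => /andP [h1 h2].
rewrite intrD in h2. apply/andP; split; lra.
Qed.

Lemma no_mono a b c (r : nat) :
  sq (a - b) = r%:R ^+ 2 -> sq (b - c) = r%:R ^+ 2 -> sq (a - c) = 4 * r%:R ^+ 2 ->
  col a = col b -> col b = col c -> (k %| r)%N.
Proof.
move=> h1 h2 h3 eab ebc.
have hid := mid_identity h1 h2 h3.
have [hb1 hm1] := col_eq _ _ eab. have [hb2 hm2] := col_eq _ _ ebc.
have ht : th a - 2 * th b + th c = ((r ^ 2)%:Z - (fl a - 2 * fl b + fl c))%:~R.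
  rewrite /th /tt_ !(intrD, intrN, intrM) /= ?natrX.
  idtac.
  move: hid; rewrite /tt_ => hid. lra.
have [a0 a1] := andP (th_bounds a).
have [b0 b1] := andP (th_bounds b).
have [c0 c1] := andP (th_bounds c).
have hr : -1 < th a - 2 * th b + th c < 1.
  move: hb1 hb2; rewrite /hb.
  case: (lerP (1/2) (th a)); case: (lerP (1/2) (th b)); case: (lerP (1/2) (th c)) => //= *;
  apply/andP; split; lra.
rewrite ht in hr.
have hz : ((r ^ 2)%:Z - (fl a - 2 * fl b + fl c) = 0)%R.
  move: hr; rewrite -[-1 : R]/((-1)%:~R) -[1 : R]/(1%:~R) !ltr_int. lia.
have ea := divz_eq (fl a) K%:Z.
have eb := divz_eq (fl b) K%:Z.
have ec := divz_eq (fl c) K%:Z.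
have hdv : (K%:Z %| (r ^ 2)%:Z)%Z.
  apply/dvdzP; exists ((fl a %/ K%:Z)%Z - 2 * (fl b %/ K%:Z)%Z + (fl c %/ K%:Z)%Z).
  have -> : (r ^ 2)%:Z = fl a - 2 * fl b + fl c by lia.
  rewrite {1}ea {1}eb {1}ec hm1 -hm2. ring.
rewrite dvdzE /= /K in hdv.
by rewrite -(@dvdn_pexp2r _ _ 2).
Qed.

End Col.

Theorem proposition30 (R : realType) (S : nat -> Prop) (k : nat)
  (hk : (0 < k)%N) (hS : forall r : nat, S r -> ~~ (k %| r)%N)
  (d : nat) (hd : (0 < d)%N) :
  exists c : 'rV[R]_d -> 'I_(2 * k ^ 2),
    forall r : nat, S r ->
    forall x y z : 'rV[int]_d, is_Ld R x y z ->
    forall f : 'rV[R]_d -> 'rV[R]_d, is_isometry f ->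
      ~ (c (f (r%:R *: intv R x)) = c (f (r%:R *: intv R y)) /\
         c (f (r%:R *: intv R y)) = c (f (r%:R *: intv R z))).
Proof.
exists (@col R d k hk) => r Sr x y z [l1 [l2 l3]] f hf [e1 e2].
have key : forall u v (s : R), enorm (intv R u - intv R v) = s ->
    sq (f (r%:R *: intv R u) - f (r%:R *: intv R v)) = r%:R ^+ 2 * s ^+ 2.
  move=> u v s h.
  by rewrite sq_enorm hf -sq_enorm -scalerBr sq_scale sq_enorm h.
have k1 := key _ _ _ l1. have k2 := key _ _ _ l2. have k3 := key _ _ _ l3.
rewrite expr1n mulr1 in k1 k2.
have k3' : sq (f (r%:R *: intv R x) - f (r%:R *: intv R z)) = 4 * r%:R ^+ 2.
  rewrite k3 mulrC; congr (_ * _); rewrite expr2; lra.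
have := @no_mono R d k hk _ _ _ r k1 k2 k3' e1 e2.
by apply/negP; apply: hS.
Qed.
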